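(* Let $(\Gamma,\boldsymbol{\ell})$ be a metric graph, $f$ an eigenfunction with eigenvalue $k^2\ne0$, and $\mathbf{x}=\mathrm{tr}_k(f)$. Let $\mathrm{supp}(f)$ be the set of edges $e_j$ with $f|_{e_j}\not\equiv0$ and set $s_j=e^{ik\ell_j}$ for $e_j\in\mathrm{supp}(f)$. Then the set $\mathcal{T}(\Gamma)_{\mathbf{x}}:=\{\mathbf{z}\in\Sigma(\Gamma):(\mathbf{z},\mathbf{x})\in\mathcal{T}(\Gamma)\}$ equals $\{\mathbf{z}\in\mathbb{T}^N: z_j=s_j\text{ for every }e_j\in\mathrm{supp}(f)\}$; in particular it is a torus of dimension $N-|\mathrm{supp}(f)|$ contained in $\Sigma(\Gamma)$.
   Context: $\Gamma$: finite graph with edges $e_1,\dots,e_N$, each oriented. $(\Gamma,\boldsymbol{\ell})$: $e_j\cong[0,\ell_j]$, Laplacian $-d^2/dt^2$ edgewise with standard vertex conditions (continuity, zero sum of outgoing derivatives at each vertex). For an eigenpair with $k>0$: $f|_{e_j}(t)=A_j\cos(kt)+B_j\sin(kt)=C_j\cos(k(\ell_j-t))+D_j\sin(k(\ell_j-t))$, and $\mathrm{tr}_k(f)\in\mathbb{C}^{4N}$ is the vector of all $A_j,B_j,C_j,D_j$ (for $k=0$, constant $c$: $A_j=C_j=c$, $B_j=D_j=0$). $\mathbb{T}^N=\{\mathbf{z}\in\mathbb{C}^N:|z_j|=1\}$, $\exp(ik\boldsymbol{\ell})=(e^{ik\ell_j})_j$. Trace space $\mathcal{T}(\Gamma)=\{(\exp(ik\boldsymbol{\ell}'),\mathrm{tr}_{k}(g))\}$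 over all $\boldsymbol{\ell}'\in\mathbb{R}_+^N$, $k\ge0$ with $k^2$ an eigenvalue of $(\Gamma,\boldsymbol{\ell}')$, and $g$ in the corresponding eigenspace (including $0$); $\Sigma(\Gamma)$ is its projection to $\mathbb{T}^N$. *)

(* Defs.v *)
From HB Require Import structures.
From mathcomp Require Import all_boot all_order all_algebra.
From mathcomp Require Import all_classical all_reals.
From mathcomp Require Import trigo.
From mathcomp Require Import complex.

Set Implicit Arguments.
Unset Strict Implicit.
Unset Printing Implicit Defensive.

Import Order.TTheory GRing.Theory Num.Theory.
Local Open Scope ring_scope.
Local Open Scope complex_scope.
Local Open Scope classical_set_scope.

(* A finite graph Γ with vertex set V and N oriented edges e_j (j : 'I_N),
   edge e_j going from vertex [src j] (at t = 0) to vertex [tgt j]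
   (at t = l j).  Loops and multiple edges are allowed. *)

Section MetricGraph.
Variables (R : realType) (V : finType) (N : nat) (src tgt : 'I_N -> V).

Definition expi (t : R) : R[i] := (cos t)%:C + 'i * (sin t)%:C.

Definition torus : set ('I_N -> R[i]) := [set z | forall j, `|z j| = 1].

Definition exp_ikl (k : R) (l : 'I_N -> R) : 'I_N -> R[i] :=
  fun j => expi (k * l j).

(* For k > 0, an edgewise solution of -f'' = k^2 f is given by
   coefficients A_j, B_j : f|_{e_j}(t) = A_j cos(kt) + B_j sin(kt). *)
Definition efun (k : R) (A B : 'I_N -> R[i]) (j : 'I_N) (t : R) : R[i] :=
  A j * (cos (k * t))%:C + B j * (sin (k * t))%:C.

Definition efun_der (k : R) (A B : 'I_N -> R[i]) (j : 'I_N) (t : R) : R[i] :=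
  k%:C * (B j * (cos (k * t))%:C - A j * (sin (k * t))%:C).

(* standard (Neumann–Kirchhoff) vertex conditions on (Γ, l):
   continuity at each vertex, and zero sum of outgoing derivatives
   (outgoing derivative is f'(0) at the origin, -f'(l_j) at the end). *)
Definition standard_conditions (l : 'I_N -> R) (k : R) (A B : 'I_N -> R[i]) : Prop :=
  (exists phi : V -> R[i], forall j,
      efun k A B j 0 = phi (src j) /\ efun k A B j (l j) = phi (tgt j)) /\
  (forall v : V,
      \sum_(j | src j == v) efun_der k A B j 0
      - \sum_(j | tgt j == v) efun_der k A B j (l j) = 0).

Definition on_support (l : 'I_N -> R) (k : R) (A B : 'I_N -> R[i]) (j : 'I_N) : Prop :=
  exists2 t, 0 <= t <= l j & efun k A B j t != 0.

Definition eigenfunction (l : 'I_N -> R) (k : R) (A B : 'I_N -> R[i]) : Prop :=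
  0 < k /\ standard_conditions l k A B /\ exists j, on_support l k A B j.

(* k^2 is an eigenvalue of (Γ, l) (k >= 0); 0 is always an eigenvalue
   (constants). *)
Definition sq_eigenvalue (l : 'I_N -> R) (k : R) : Prop :=
  k = 0 \/ exists A B, eigenfunction l k A B.

(* the trace vector tr_k(f) ∈ C^{4N}, stored as (A_j, B_j, C_j, D_j)_j,
   where f|_{e_j}(t) = C_j cos(k(l_j - t)) + D_j sin(k(l_j - t)), i.e.
   C_j = f(l_j), D_j = - f'(l_j) / k. *)
Definition trace_vec := 'I_N -> (R[i] * R[i] * R[i] * R[i])%type.

Definition tr_k (l : 'I_N -> R) (k : R) (A B : 'I_N -> R[i]) : trace_vec :=
  fun j => (A j, B j,
            A j * (cos (k * l j))%:C + B j * (sin (k * l j))%:C,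
            A j * (sin (k * l j))%:C - B j * (cos (k * l j))%:C).

(* trace of the constant eigenfunction c for k = 0 *)
Definition tr_0 (c : R[i]) : trace_vec := fun _ => (c, 0, c, 0).

Definition trace_space : set (('I_N -> R[i]) * trace_vec) :=
  [set zx | exists l : 'I_N -> R, (forall j, 0 < l j) /\
     ((exists c : R[i], zx = (exp_ikl 0 l, tr_0 c)) \/
      (exists k : R, 0 < k /\ sq_eigenvalue l k /\
         exists A B : 'I_N -> R[i], standard_conditions l k A B /\
           zx = (exp_ikl k l, tr_k l k A B)))].

Definition Sigma : set ('I_N -> R[i]) := [set z | exists x, trace_space (z, x)].

Definition fibre (x : trace_vec) : set ('I_N -> R[i]) :=
  [set z | Sigma z /\ trace_space (z, x)].

End MetricGraph.

(* Main.v *)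
Require Import Defs.
From HB Require Import structures.
From mathcomp Require Import all_boot all_order all_algebra.
From mathcomp Require Import all_classical all_reals.
From mathcomp Require Import trigo.
From mathcomp Require Import complex.
From mathcomp Require Import ring lra.
Import Order.TTheory GRing.Theory Num.Theory.
Local Open Scope ring_scope.
Local Open Scope complex_scope.
Local Open Scope classical_set_scope.

Lemma expiE (R : realType) (t : R) : expi t = (cos t) +i* (sin t).
Proof. by apply/eqP; rewrite /expi eq_complex /=; apply/andP; split; apply/eqP; ring. Qed.

Lemma norm_expi (R : realType) (t : R) : `|expi t| = 1.
Proof.
have h := add_Re2_Im2 (expi t).
rewrite {1 2}expiE /= (addrC (cos t ^+ 2)) sin2cos2 in h.
have h2 : `|expi t| ^+ 2 = 1 ^+ 2 by rewrite -h subrK expr1n.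
by move/eqP: h2; rewrite eqrXn2 //; move/eqP.
Qed.

Lemma torus_arg (R : realType) (z : R[i]) : `|z| = 1 -> exists t : R, 0 < t /\ expi t = z.
Proof.
case: z => a b hz.
have h := add_Re2_Im2 (a +i* b).
rewrite hz expr1n /= in h.
have hab : a ^+ 2 + b ^+ 2 = 1 by apply: (@complexI R); rewrite h.
have ha : -1 <= a <= 1 by apply/andP; split; nra.
have hs : sin (acos a) = `|b|.
  by rewrite sin_acos // -sqrtr_sqr; congr Num.sqrt; lra.
have hc : cos (acos a) = a by rewrite acosK // in_itv.
have ac0 := acos_ge0 ha; have acpi := acos_lepi ha; have pi0 := @pi_gt0 R.
have [b0|b0] := leP 0 b.
  exists (acos a + pi *+ 2); split; first by rewrite mulr2n; lra.
  by rewrite expiE cosD2pi sinD2pi hc hs ger0_norm.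
exists (pi *+ 2 - acos a); split; first by rewrite mulr2n; lra.
rewrite expiE cosB sinB cos2pi sin2pi hc hs ltr0_norm //.
congr (_ +i* _); ring.
Qed.

Lemma zeroAB (R : realType) (N : nat) (l : 'I_N -> R) (k : R) (A B : 'I_N -> R[i]) j :
  0 < k -> 0 < l j -> ~ on_support l k A B j -> A j = 0 /\ B j = 0.
Proof.
move=> k0 l0 ns.
have h t : 0 <= t <= l j -> efun k A B j t = 0.
  move=> ht; apply/eqP; apply/negPn/negP => hne; apply: ns; by exists t.
have hA : A j = 0.
  have := h 0; rewrite lexx ltW // => /(_ isT).
  by rewrite /efun mulr0 cos0 sin0 mulr1 mulr0 addr0.
split => //.
have pi0 := @pi_gt0 R.
set d := pi + k * l j.
have d0 : 0 < d by rewrite /d; nra.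
set t := l j * pi / d.
have t0 : 0 < t by rewrite /t; apply: divr_gt0 => //; nra.
have tl : t <= l j by rewrite /t ler_pdivrMr //; rewrite /d; nra.
have kt : 0 < k * t < pi.
  apply/andP; split; first by nra.
  by rewrite /t mulrA ltr_pdivrMr // /d; nra.
have := h t; rewrite ltW // tl => /(_ isT).
rewrite /efun hA mul0r add0r => /eqP; rewrite mulf_eq0 => /orP [/eqP //|].
have := sin_gt0_pi kt; rewrite lt0r => /andP [hs _].
by rewrite -(rmorph0 (real_complex R)) (inj_eq (@complexI R)) (negbTE hs).
Qed.

Lemma trace_eq (R : realType) (A B : R[i]) (c s c' s' : R) :
  (A != 0) || (B != 0) ->
  A * c%:C + B * s%:C = A * c'%:C + B * s'%:C ->
  A * s%:C - B * c%:C = A * s'%:C - B * c'%:C -> c = c' /\ s = s'.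
Proof.
move=> hAB h1 h2.
set al := c%:C - c'%:C; set be := s%:C - s'%:C.
have e1 : A * al + B * be = 0.
  by move: h1 => /eqP; rewrite -subr_eq0 => /eqP <-; rewrite /al /be; ring.
have e2 : A * be - B * al = 0.
  by move: h2 => /eqP; rewrite -subr_eq0 => /eqP <-; rewrite /al /be; ring.
have qA : (al ^+ 2 + be ^+ 2) * A = 0.
  have -> : (al ^+ 2 + be ^+ 2) * A = al * (A * al + B * be) + be * (A * be - B * al) by ring.
  by rewrite e1 e2 !mulr0 addr0.
have qB : (al ^+ 2 + be ^+ 2) * B = 0.
  have -> : (al ^+ 2 + be ^+ 2) * B = be * (A * al + B * be) - al * (A * be - B * al) by ring.
  by rewrite e1 e2 !mulr0 subr0.
have q0 : al ^+ 2 + be ^+ 2 = 0.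
  apply/eqP; apply: contraTT hAB => hq.
  move/eqP: qA; rewrite mulf_eq0 (negbTE hq) /= => /eqP ->.
  by move/eqP: qB; rewrite mulf_eq0 (negbTE hq) /= => /eqP ->; rewrite eqxx.
have : ((c - c') ^+ 2 + (s - s') ^+ 2)%:C = 0 :> R[i].
  by rewrite rmorphD !rmorphXn !rmorphB.
rewrite -(rmorph0 (real_complex R)) => /(@complexI R) /eqP.
rewrite paddr_eq0 ?sqr_ge0 // !sqrf_eq0 !subr_eq0 => /andP [/eqP -> /eqP ->].
by [].
Qed.

Lemma supp_nz (R : realType) (N : nat) (l : 'I_N -> R) (k : R) (A B : 'I_N -> R[i]) j :
  on_support l k A B j -> (A j != 0) || (B j != 0).
Proof.
case=> t _; apply: contraNT; rewrite negb_or !negbK => /andP [/eqP hA /eqP hB].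
by rewrite /efun hA hB !mul0r addr0.
Qed.

Arguments supp_nz {R N l k A B j}.
Arguments zeroAB {R N l k A B j}.
Arguments trace_eq {R A B c s c' s'}.

Theorem mainTheorem18 (R : realType) (V : finType) (N : nat)
    (src tgt : 'I_N -> V) (l : 'I_N -> R) (k : R) (A B : 'I_N -> R[i]) :
  (forall j, 0 < l j) ->
  eigenfunction src tgt l k A B ->
  fibre src tgt (tr_k l k A B) =
    [set z | torus z /\
       forall j, on_support l k A B j -> z j = expi (k * l j)] /\
  fibre src tgt (tr_k l k A B) `<=` Sigma src tgt.
Proof.
move=> hl [kpos [sc [j0 hj0]]].
split; last by move=> z [].
apply/seteqP; split => z.
- move=> [_ [l' [hl' [[c [-> ex]] | [k' [k'pos [_ [A' [B' [sc' ezx]]]]]]]]]].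
  + have hj j : [/\ A j = c, B j = 0, A j * (cos (k * l j))%:C + B j * (sin (k * l j))%:C = c
       & A j * (sin (k * l j))%:C - B j * (cos (k * l j))%:C = 0].
      by have := congr1 (fun f => f j) ex; rewrite /tr_k /tr_0; case.
    have c0 : c != 0.
      have := supp_nz hj0; have [-> -> _ _] := hj j0; by rewrite eqxx orbF.
    split.
      by move=> j; rewrite /exp_ikl norm_expi.
    move=> j _; have [hA hB hC hD] := hj j.
    move: hC hD; rewrite hA hB !mul0r addr0 subr0 => hC /eqP.
    rewrite mulf_eq0 (negbTE c0) /= => /eqP hs.
    have hc : (cos (k * l j))%:C = 1 :> R[i].
      by apply: (mulfI c0); rewrite hC mulr1.
    rewrite /exp_ikl mul0r !expiE cos0 sin0.
    move: hc hs; rewrite -(rmorph0 (real_complex R)) -(rmorph1 (real_complex R)).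
    by move=> /(@complexI R) -> /(@complexI R) ->.
  + case: ezx => -> ex.
    split; first by move=> j; rewrite /exp_ikl norm_expi.
    move=> j hj.
    have := congr1 (fun f => f j) ex; rewrite /tr_k; case=> hA hB hC hD.
    move: hC hD; rewrite -hA -hB => hC hD.
    have [e1 e2] := trace_eq (supp_nz hj) hC hD.
    by rewrite /exp_ikl !expiE e1 e2.
- move=> [hz hsupp].
  have /choice [th hth] : forall j, exists t : R, 0 < t /\ expi t = z j.
    by move=> j; apply: torus_arg.
  pose l' j := if `[< on_support l k A B j >] then l j else th j / k.
  have hl' j : 0 < l' j.
    rewrite /l'; case: asboolP => _; first exact: hl.
    by apply: divr_gt0 => //; case: (hth j).
  have key j : [/\ efun k A B j (l' j) = efun k A B j (l j),
       efun_der k A B j (l' j) = efun_der k A B j (l j) &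
       tr_k l' k A B j = tr_k l k A B j].
    rewrite /tr_k /= /l'; case: asboolP => hs; first by [].
    have [hA hB] := zeroAB kpos (hl j) hs.
    by rewrite /efun /efun_der hA hB !mul0r !subrr !addr0.
  have sc' : standard_conditions src tgt l' k A B.
    case: sc => [[phi hphi] hK]; split.
      exists phi => j; have [-> _ _] := key j; exact: hphi.
    move=> v.
    have -> : \sum_(j | tgt j == v) efun_der k A B j (l' j) =
              \sum_(j | tgt j == v) efun_der k A B j (l j).
      by apply: eq_bigr => j _; have [_ -> _] := key j.
    exact: hK.
  have ts : trace_space src tgt (z, tr_k l k A B).
    exists l'; split => //; right; exists k; split => //; split.
      right; exists A, B; split => //; split => //; exists j0.
      by rewrite /on_support /l'; case: asboolP.
    exists A, B; split => //; congr pair.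
      apply: funext => j; rewrite /exp_ikl /l'; case: asboolP => hs.
        by rewrite hsupp.
      by case: (hth j) => _ <-; rewrite mulrC divfK // gt_eqF.
    by apply: funext => j; have [_ _ ->] := key j.
  by split => //; exists (tr_k l k A B).
Qed.
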